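(* For $\tau\in\mathbb{R}$, $$\mu_0(\tau;0):=\int_{-\infty}^{\infty}\exp(-x^6+\tau x^4)\,dx$$ is given by $$\mu_0(\tau;0)=\tfrac13\Gamma\!\left(\tfrac16\right){}_2F_2\!\left(\tfrac1{12},\tfrac7{12};\tfrac13,\tfrac23;\tfrac{4\tau^3}{27}\right)+\tfrac13\tau\Gamma\!\left(\tfrac56\right){}_2F_2\!\left(\tfrac5{12},\tfrac{11}{12};\tfrac23,\tfrac43;\tfrac{4\tau^3}{27}\right)+\frac{\tau^2\sqrt{\pi}}{12}{}_2F_2\!\left(\tfrac34,\tfrac54;\tfrac43,\tfrac53;\tfrac{4\tau^3}{27}\right).$$
   Context: ${}_2F_2(a_1,a_2;b_1,b_2;z)$ denotes the generalised hypergeometric function with upper parameters $a_1,a_2$ and lower parameters $b_1,b_2$. *)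

(* Defs.v *)
From Stdlib Require Import Reals.
From Coquelicot Require Import Coquelicot.
Open Scope R_scope.

Fixpoint poch (a : R) (n : nat) : R :=
  match n with
  | O => 1
  | S m => poch a m * (a + INR m)
  end.

(* Generalised hypergeometric function 2F2(a1,a2;b1,b2;z) as the sum of its
   (everywhere convergent) power series. *)
Definition hyp2F2 (a1 a2 b1 b2 z : R) : R :=
  Series (fun n => poch a1 n * poch a2 n / (poch b1 n * poch b2 n)
                   * z ^ n / INR (Factorial.fact n)).

Definition Gamma (s : R) : R :=
  RInt_gen (fun t => Rpower t (s - 1) * exp (- t))
           (at_right 0) (Rbar_locally p_infty).

(* Main.v *)
Require Import Defs.
From Stdlib Require Import Reals.
From Coquelicot Require Import Coquelicot.
From Stdlib Require Import Lra Lia Psatz Factorial Classical.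
Open Scope R_scope.

(* Coquelicot improper integrals. Proof of lemma6p3 by
   termwise integration of the exponential series, Gamma-function
   substitution t = x^6 and the Gaussian integral. *)

Lemma exp_le_mono x y : x <= y -> exp x <= exp y.
Proof. intros [H|H]. left; now apply exp_increasing. subst; lra. Qed.

Lemma cont_of_der (f : R -> R) x : ex_derive f x -> continuous f x.
Proof. apply (@ex_derive_continuous R_AbsRing R_NormedModule). Qed.

Lemma Rpower_der x y : 0 < x -> is_derive (fun t => Rpower t y) x (y * Rpower x (y - 1)).
Proof. intros Hx. apply is_derive_Reals. now apply derivable_pt_lim_power. Qed.

Lemma sum_f_R0_ge_last (f : nat -> R) n : (forall k, 0 <= f k) -> f n <= sum_f_R0 f n.
Proof.
  intros H. destruct n. simpl; lra.
  simpl. assert (0 <= sum_f_R0 f n).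
  { clear -H. induction n; simpl. apply H. specialize (H (S n)). lra. }
  lra.
Qed.

Lemma exp_ge_pow x n : 0 <= x -> x ^ n / INR (fact n) <= exp x.
Proof.
  intros Hx. eapply Rle_trans; [|apply exp_ge_taylor; auto].
  apply (sum_f_R0_ge_last (fun k => x ^ k / INR (fact k))).
  intros k. apply Rdiv_le_0_compat. apply pow_le; auto. apply lt_0_INR, lt_O_fact.
Qed.

Lemma poly_exp_bound n p : (1 <= p)%nat -> forall b, 1 <= b ->
  b ^ n * exp (- b ^ p) <= INR (fact (S n)) / b.
Proof.
  intros Hp b Hb.
  set (N := S n).
  assert (Hf : 0 < INR (fact N)) by apply lt_0_INR, lt_O_fact.
  assert (Hbp : 0 <= b ^ p) by (apply pow_le; lra).
  assert (H1 := exp_ge_pow (b ^ p) N Hbp).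
  assert (H2 : b ^ (n + 1) <= (b ^ p) ^ N).
  { rewrite <- pow_mult. apply Rle_pow; auto. unfold N; nia. }
  assert (Hbn : 0 < b ^ n) by (apply pow_lt; lra).
  assert (He : 0 < exp (b ^ p)) by apply exp_pos.
  rewrite exp_Ropp.
  rewrite pow_add, pow_1 in H2.
  apply Rmult_le_reg_r with (exp (b ^ p) * b). nra.
  field_simplify; [| lra | lra].
  rewrite (Rmult_comm (exp _)).
  assert (b ^ n * b <= INR (fact N) * exp (b ^ p)).
  { apply Rmult_le_reg_r with (/ INR (fact N)). apply Rinv_0_lt_compat; lra.
    replace (INR (fact N) * exp (b ^ p) * / INR (fact N)) with (exp (b ^ p)) by (field; lra).
    eapply Rle_trans; [|apply H1]. unfold Rdiv.
    apply Rmult_le_compat_r. left; apply Rinv_0_lt_compat; lra. lra. }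
  lra.
Qed.

Definition limp (F : R -> R) (l : R) :=
  forall eps, 0 < eps -> exists M, forall x, M < x -> Rabs (F x - l) < eps.

Lemma gen_prim (f F : R -> R) (Fa Fb : (R -> Prop) -> Prop) {FFa : Filter Fa} {FFb : Filter Fb} la lb :
  filter_prod Fa Fb (fun ab => is_RInt f (fst ab) (snd ab) (F (snd ab) - F (fst ab))) ->
  (forall eps, 0 < eps -> Fa (fun a => Rabs (F a - la) < eps)) ->
  (forall eps, 0 < eps -> Fb (fun b => Rabs (F b - lb) < eps)) ->
  is_RInt_gen f Fa Fb (lb - la).
Proof.
  intros HI Ha Hb P [eps HP].
  unfold filtermapi.
  assert (He : 0 < eps/2) by (destruct eps; simpl; lra).
  apply filter_imp with (fun ab => is_RInt f (fst ab) (snd ab) (F (snd ab) - F (fst ab)) /\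
     (Rabs (F (fst ab) - la) < eps/2 /\ Rabs (F (snd ab) - lb) < eps/2)).
  - intros [a b] [H1 [H2 H3]]. exists (F b - F a). split; auto. apply HP.
    change (Rabs ((F b - F a) - (lb - la)) < eps). simpl in H2, H3.
    apply Rabs_def2 in H2. apply Rabs_def2 in H3. apply Rabs_def1; lra.
  - apply filter_and; auto.
    apply (Filter_prod _ _ _ (fun a => Rabs (F a - la) < eps/2) (fun b => Rabs (F b - lb) < eps/2)); auto.
Qed.

Lemma Rcorr (f : R -> R) a b : ex_RInt f a b -> is_RInt f a b (RInt f a b).
Proof. apply (@RInt_correct R_CompleteNormedModule). Qed.

Lemma Rex_cont (f : R -> R) a b : (forall z, Rmin a b <= z <= Rmax a b -> continuous f z) -> ex_RInt f a b.
Proof. apply (@ex_RInt_continuous R_CompleteNormedModule). Qed.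

Lemma Runiq (f : R -> R) a b l : is_RInt f a b l -> RInt f a b = l.
Proof. apply (@is_RInt_unique R_CompleteNormedModule). Qed.

Lemma Rderiv_int (F f : R -> R) a b :
  (forall x, Rmin a b <= x <= Rmax a b -> is_derive F x (f x)) ->
  (forall x, Rmin a b <= x <= Rmax a b -> continuous f x) ->
  is_RInt f a b (F b - F a).
Proof. intros. apply (@is_RInt_derive R_CompleteNormedModule); auto. Qed.

Lemma RInt_lin2 (f g : R -> R) a b c1 c2 : ex_RInt f a b -> ex_RInt g a b ->
  RInt (fun x => c1 * f x + c2 * g x) a b = c1 * RInt f a b + c2 * RInt g a b.
Proof.
  intros Hf Hg. apply Runiq.
  apply (is_RInt_plus (fun x => c1 * f x) (fun x => c2 * g x)).
  apply (is_RInt_scal f a b c1). now apply Rcorr.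
  apply (is_RInt_scal g a b c2). now apply Rcorr.
Qed.

Ltac contd := apply cont_of_der; auto_derive; auto.

Definition w (m : nat) (x : R) := x ^ m * exp (- x ^ 6).
Definition J (m : nat) (b : R) := RInt (w m) 0 b.

Lemma w_cont m x : continuous (w m) x.
Proof. unfold w; contd. Qed.

Lemma w_ex m a b : ex_RInt (w m) a b.
Proof. apply Rex_cont; intros; apply w_cont. Qed.

Lemma J_rec m b : J (m + 6) b = (INR m + 1) / 6 * J m b - b ^ (m + 1) * exp (- b ^ 6) / 6.
Proof.
  assert (H := is_RInt_derive (fun x => x ^ (m + 1) * exp (- x ^ 6))
     (fun x => (INR m + 1) * w m x + (-6) * w (m + 6) x) 0 b).
  assert (H' : is_RInt (fun x => (INR m + 1) * w m x + (-6) * w (m + 6) x) 0 b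
              (b ^ (m + 1) * exp (- b ^ 6))).
  { replace (b ^ (m + 1) * exp (- b ^ 6)) with
      (minus (b ^ (m + 1) * exp (- b ^ 6)) (0 ^ (m + 1) * exp (- 0 ^ 6))).
    2:{ rewrite pow_i by lia. unfold minus, plus, opp; simpl; ring. }
    apply H.
    - intros x _. auto_derive; auto. replace (Init.Nat.pred (m + 1)) with m by lia. unfold w. rewrite !pow_add, plus_INR. simpl. ring.
    - intros x _. apply cont_of_der. unfold w; auto_derive; auto. }
  apply Runiq in H'. rewrite RInt_lin2 in H' by apply w_ex.
  unfold J. lra.
Qed.

Definition v (m : nat) (x : R) := x ^ m * exp (- x ^ 6 / 2).
Definition K (m : nat) (b : R) := RInt (v m) 0 b.

Lemma v_cont m x : continuous (v m) x.
Proof. unfold v; contd. Qed.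

Lemma v_ex m a b : ex_RInt (v m) a b.
Proof. apply Rex_cont; intros; apply v_cont. Qed.

Lemma K_rec m b : K (m + 6) b = (INR m + 1) / 3 * K m b - b ^ (m + 1) * exp (- b ^ 6 / 2) / 3.
Proof.
  assert (H := is_RInt_derive (fun x => x ^ (m + 1) * exp (- x ^ 6 / 2))
     (fun x => (INR m + 1) * v m x + (-3) * v (m + 6) x) 0 b).
  assert (H' : is_RInt (fun x => (INR m + 1) * v m x + (-3) * v (m + 6) x) 0 b
              (b ^ (m + 1) * exp (- b ^ 6 / 2))).
  { replace (b ^ (m + 1) * exp (- b ^ 6 / 2)) with
      (minus (b ^ (m + 1) * exp (- b ^ 6 / 2)) (0 ^ (m + 1) * exp (- 0 ^ 6 / 2))).
    2:{ rewrite pow_i by lia. unfold minus, plus, opp; simpl; ring. }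
    apply H.
    - intros x _. auto_derive; auto. replace (Init.Nat.pred (m + 1)) with m by lia.
      unfold v. rewrite !pow_add, plus_INR. simpl. unfold Rdiv. field.
    - intros x _. apply cont_of_der. unfold v; auto_derive; auto. }
  apply Runiq in H'. rewrite RInt_lin2 in H' by apply v_ex.
  unfold K. lra.
Qed.

Lemma v_pos m x : 0 <= x -> 0 <= v m x.
Proof. intros. unfold v. apply Rmult_le_pos. apply pow_le; auto. left; apply exp_pos. Qed.

Lemma K_pos m b : 0 <= b -> 0 <= K m b.
Proof. intros. apply RInt_ge_0; auto. apply v_ex. intros; apply v_pos; lra. Qed.

Lemma pow_le_one' x m : 0 <= x <= 1 -> x ^ m <= 1.
Proof. intros. rewrite <- (pow1 m). apply pow_incr. lra. Qed.

Lemma K_le_rec m b : 0 <= b -> K (m + 6) b <= (INR m + 1) / 3 * K m b.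
Proof.
  intros Hb. rewrite K_rec.
  assert (0 <= b ^ (m + 1) * exp (- b ^ 6 / 2)).
  { apply Rmult_le_pos. apply pow_le; auto. left; apply exp_pos. }
  lra.
Qed.

Lemma K_base m b : (m <= 5)%nat -> 0 <= b -> K m b <= 2.
Proof.
  intros Hm Hb.
  assert (H01 : forall c, 0 <= c <= 1 -> K m c <= 1).
  { intros c Hc. unfold K.
    apply Rle_trans with (RInt (fun _ => 1) 0 c).
    - apply RInt_le. lra. apply v_ex. apply ex_RInt_const.
      intros x Hx. unfold v. rewrite <- (Rmult_1_r 1). apply Rmult_le_compat.
      apply pow_le; lra. left; apply exp_pos. apply pow_le_one'; lra.
      rewrite <- exp_0. apply exp_le_mono. assert (0 <= x ^ 6) by (apply pow_le; lra). lra.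
    - rewrite RInt_const. unfold scal; simpl; unfold mult; simpl. lra. }
  destruct (Rle_lt_dec b 1) as [Hb1|Hb1]. apply Rle_trans with 1. apply H01; lra. lra.
  unfold K. rewrite <- (RInt_Chasles (v m) 0 1 b) by apply v_ex.
  fold (K m 1).
  assert (K m 1 <= 1) by (apply H01; lra).
  assert (RInt (v m) 1 b <= 1).
  { apply Rle_trans with (RInt (v 5) 1 b).
    - apply RInt_le. lra. apply v_ex. apply v_ex.
      intros x Hx. unfold v. apply Rmult_le_compat_r. left; apply exp_pos.
      apply Rle_pow; [lra|lia].
    - assert (HH : is_RInt (v 5) 1 b ((fun x => - exp (- x ^ 6 / 2) / 3) b - (fun x => - exp (- x ^ 6 / 2) / 3) 1)).
      { apply (Rderiv_int (fun x => - exp (- x ^ 6 / 2) / 3)).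
        + intros x _. auto_derive; auto. unfold v. simpl. unfold Rdiv. field.
        + intros; apply v_cont. }
      rewrite (Runiq _ _ _ _ HH). simpl.
      assert (0 < exp (- b ^ 6 / 2)) by apply exp_pos.
      assert (exp (-1/2) <= 1). { rewrite <- exp_0. apply exp_le_mono. lra. }
      replace (- (1 * (1 * (1 * (1 * (1 * (1 * 1)))))) / 2) with (-1/2) by lra.
      simpl in *. lra. }
  unfold plus; simpl. lra.
Qed.

Fixpoint Bd (m : nat) : R :=
  match m with
  | S (S (S (S (S (S j))))) => (INR j + 1) / 3 * Bd j
  | _ => 2
  end.

Lemma Bd_K_aux n : forall m, (m <= n)%nat -> (0 <= Bd m /\ forall b, 0 <= b -> K m b <= Bd m).
Proof.
  induction n as [|n IH]; intros m Hm.
  - replace m with 0%nat by lia. simpl. split. lra. intros; apply K_base; auto; lia.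
  - destruct m as [|[|[|[|[|[|j]]]]]];
      try (simpl; split; [lra | intros; apply K_base; auto; lia]).
    destruct (IH j ltac:(lia)) as [H1 H2].
    change (Bd (S (S (S (S (S (S j))))))) with ((INR j + 1) / 3 * Bd j).
    assert (0 <= INR j) by apply pos_INR.
    split. apply Rmult_le_pos; auto. lra.
    intros b Hb. replace (S (S (S (S (S (S j)))))) with (j + 6)%nat by lia.
    eapply Rle_trans. apply K_le_rec; auto.
    apply Rmult_le_compat_l. lra. auto.
Qed.

Lemma Bd_pos m : 0 <= Bd m.
Proof. apply (proj1 (Bd_K_aux m m (le_n m))). Qed.

Lemma K_le_Bd m b : 0 <= b -> K m b <= Bd m.
Proof. apply (proj2 (Bd_K_aux m m (le_n m))). Qed.

Lemma INR_le_pow2 n : INR n <= 2 ^ n.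
Proof.
  induction n. simpl; lra. rewrite S_INR. simpl.
  assert (1 <= 2 ^ n) by (apply pow_R1_Rle; lra). lra.
Qed.

Lemma seq3_to0 (a : nat -> R) N0 : (forall n, 0 <= a n) ->
  (forall n, (N0 <= n)%nat -> a (n + 3)%nat <= a n / 2) ->
  forall eps, 0 < eps -> exists N1, forall n, (N1 <= n)%nat -> a n < eps.
Proof.
  intros Hpos Hrat eps Heps.
  set (M := a N0 + a (N0 + 1)%nat + a (N0 + 2)%nat).
  assert (Hc : forall j i, (i < 3)%nat -> a (N0 + i + 3 * j)%nat <= M / 2 ^ j).
  { induction j as [|j IHj]; intros i Hi.
    - simpl. replace (N0 + i + 0)%nat with (N0 + i)%nat by lia. unfold M.
      assert (H0 := Hpos N0). assert (H1 := Hpos (N0+1)%nat). assert (H2 := Hpos (N0+2)%nat).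
      destruct i as [|[|[|i]]]; try lia.
      + replace (N0 + 0)%nat with N0 by lia. lra.
      + lra.
      + lra.
    - replace (N0 + i + 3 * S j)%nat with ((N0 + i + 3 * j) + 3)%nat by lia.
      eapply Rle_trans. apply Hrat. lia.
      change (2 ^ S j) with (2 * 2 ^ j). assert (0 < 2 ^ j) by (apply pow_lt; lra).
      specialize (IHj i Hi).
      apply Rmult_le_reg_r with 2. lra.
      replace (M / (2 * 2 ^ j) * 2) with (M / 2 ^ j) by (field; lra). lra. }
  assert (HM : 0 <= M) by (unfold M; generalize (Hpos N0) (Hpos (N0+1)%nat) (Hpos (N0+2)%nat); lra).
  destruct (INR_unbounded (M / eps)) as [J HJ].
  exists (N0 + 3 * J)%nat. intros n Hn.
  set (j := ((n - N0) / 3)%nat). set (i := ((n - N0) mod 3)%nat).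
  assert (Hi : (i < 3)%nat) by (apply Nat.mod_upper_bound; lia).
  assert (Hn' : n = (N0 + i + 3 * j)%nat).
  { unfold i, j. generalize (Nat.div_mod (n - N0) 3 ltac:(lia)). lia. }
  assert (HjJ : (J <= j)%nat).
  { unfold j. apply Nat.div_le_lower_bound; lia. }
  rewrite Hn'. eapply Rle_lt_trans. apply Hc; auto.
  assert (H2J : INR J <= 2 ^ j).
  { eapply Rle_trans. apply INR_le_pow2. apply Rle_pow; auto. lra. }
  assert (0 < 2 ^ j) by (apply pow_lt; lra).
  apply Rmult_lt_reg_r with (2 ^ j). auto.
  replace (M / 2 ^ j * 2 ^ j) with M by (field; lra).
  assert (M < eps * INR J).
  { apply Rmult_lt_reg_r with (/ eps). apply Rinv_0_lt_compat; auto.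
    replace (eps * INR J * / eps) with (INR J) by (field; lra). unfold Rdiv in HJ. lra. }
  nra.
Qed.

Lemma fact_mul_le a b : (fact a * fact b <= fact (a + b))%nat.
Proof.
  induction b. simpl. rewrite Nat.add_0_r. lia.
  rewrite Nat.add_succ_r. change (fact (S b)) with (S b * fact b)%nat.
  change (fact (S (a + b))) with (S (a + b) * fact (a + b))%nat. nia.
Qed.

Lemma exp_series y : is_series (fun k => y ^ k / INR (fact k)) (exp y).
Proof.
  eapply is_series_ext; [|apply (is_exp_Reals y)].
  intros n. simpl. rewrite pow_n_pow. unfold scal; simpl; unfold mult; simpl. unfold Rdiv; ring.
Qed.

Lemma fact_pos n : 0 < INR (fact n).
Proof. apply lt_0_INR, lt_O_fact. Qed.

Lemma taylor_bound y N :
  Rabs (exp y - sum_n (fun k => y ^ k / INR (fact k)) N) <=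
  Rabs y ^ (S N) / INR (fact (S N)) * exp (Rabs y).
Proof.
  set (a := fun k => y ^ k / INR (fact k)).
  assert (Ht : is_series (fun k => a (S N + k)%nat) (exp y - sum_n a N)).
  { apply (is_series_incr_n a (S N)). lia.
    change (is_series a (plus (exp y - sum_n a N) (sum_n a N))).
    assert (E : plus (exp y - sum_n a N) (sum_n a N) = exp y) by (unfold plus; simpl; ring).
    rewrite E. apply exp_series. }
  set (c := Rabs y ^ (S N) / INR (fact (S N))).
  assert (Hb : is_series (fun k => c * (Rabs y ^ k / INR (fact k))) (c * exp (Rabs y))).
  { apply (is_series_scal c _ _ (exp_series (Rabs y))). }
  assert (Hle : forall k, 0 <= Rabs (a (S N + k)%nat) <= c * (Rabs y ^ k / INR (fact k))).
  { intros k. split. apply Rabs_pos. unfold a, c.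
    rewrite Rabs_div by (apply Rgt_not_eq, fact_pos). rewrite <- RPow_abs.
    rewrite (Rabs_right (INR _)) by (left; apply fact_pos).
    rewrite pow_add.
    assert (Hf := fact_mul_le (S N) k). apply le_INR in Hf. rewrite mult_INR in Hf.
    assert (0 < INR (fact (S N))) by apply fact_pos.
    assert (0 < INR (fact k)) by apply fact_pos.
    assert (0 <= Rabs y ^ S N) by (apply pow_le, Rabs_pos).
    assert (0 <= Rabs y ^ k) by (apply pow_le, Rabs_pos).
    unfold Rdiv. rewrite Rmult_assoc.
    replace (Rabs y ^ S N * / INR (fact (S N)) * (Rabs y ^ k * / INR (fact k)))
      with (Rabs y ^ S N * (Rabs y ^ k * / (INR (fact (S N)) * INR (fact k)))) by (field; lra).
    apply Rmult_le_compat_l; auto. apply Rmult_le_compat_l; auto.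
    apply Rinv_le_contravar; auto. nra. }
  assert (Hex : ex_series (fun k => Rabs (a (S N + k)%nat))).
  { apply (@ex_series_le R_AbsRing R_CompleteNormedModule _ (fun k => c * (Rabs y ^ k / INR (fact k)))).
    intros k. unfold norm; simpl. unfold abs; simpl. rewrite Rabs_Rabsolu. apply Hle. eexists; eauto. }
  rewrite <- (is_series_unique _ _ Ht).
  eapply Rle_trans. apply Series_Rabs; auto.
  rewrite <- (is_series_unique _ _ Hb).
  apply Series_le; auto. eexists; eauto.
Qed.

Lemma sum_RInt (g : nat -> R -> R) a b N : (forall k, ex_RInt (g k) a b) ->
  is_RInt (fun x => sum_n (fun k => g k x) N) a b (sum_n (fun k => RInt (g k) a b) N).
Proof.
  intros Hg. induction N.
  - rewrite sum_O. apply (is_RInt_ext (g 0%nat)). intros; rewrite sum_O; auto. apply Rcorr; auto.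
  - rewrite sum_Sn. apply (is_RInt_ext (fun x => plus (sum_n (fun k => g k x) N) (g (S N) x))).
    intros; rewrite sum_Sn; auto.
    apply (is_RInt_plus (V := R_NormedModule)); auto. apply Rcorr; auto.
Qed.

Lemma key_ineq s x : 0 <= s -> 0 <= x -> s * x ^ 4 <= 4 * s ^ 3 + x ^ 6 / 2.
Proof.
  intros Hs Hx. set (y := x ^ 2).
  assert (Hy : 0 <= y) by (unfold y; apply pow_le; auto).
  replace (x ^ 4) with (y ^ 2) by (unfold y; ring).
  replace (x ^ 6) with (y ^ 3) by (unfold y; ring).
  destruct (Rle_lt_dec (2 * s) y).
  - assert (0 <= s * y ^ 2) by (apply Rmult_le_pos; auto; apply pow_le; auto).
    assert (s ^ 3 >= 0) by (apply Rle_ge, pow_le; auto). nra.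
  - assert (y ^ 2 <= 4 * s ^ 2) by nra.
    assert (0 <= y ^ 3) by (apply pow_le; auto). nra.
Qed.

Section Main.
Variable tau : R.

Definition f (x : R) := exp (- x ^ 6 + tau * x ^ 4).
Definition cc (k : nat) := tau ^ k / INR (fact k).
Definition PP (N : nat) (b : R) := sum_n (fun k => cc k * J (4 * k) b) N.
Definition EE (N : nat) := exp (4 * Rabs tau ^ 3) * (Rabs tau ^ S N / INR (fact (S N))) * Bd (4 * S N).

Lemma f_cont x : continuous f x.
Proof. unfold f; contd. Qed.

Lemma f_ex a b : ex_RInt f a b.
Proof. apply Rex_cont; intros; apply f_cont. Qed.

Lemma err_bound N b : 0 <= b -> Rabs (RInt f 0 b - PP N b) <= EE N.
Proof.
  intros Hb.
  set (h := fun x => f x - sum_n (fun k => cc k * w (4 * k) x) N).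
  assert (Hs : is_RInt (fun x => sum_n (fun k => cc k * w (4 * k) x) N) 0 b (PP N b)).
  { unfold PP, J. apply (is_RInt_ext (fun x => sum_n (fun k => (fun k x => cc k * w (4 * k) x) k x) N)).
    auto.
    replace (sum_n (fun k => cc k * RInt (w (4 * k)) 0 b) N) with
      (sum_n (fun k => RInt ((fun k x => cc k * w (4 * k) x) k) 0 b) N).
    apply sum_RInt. intros k. apply (ex_RInt_scal (V:=R_NormedModule)). apply w_ex.
    apply sum_n_ext. intros k. apply Runiq. apply (is_RInt_scal (V:=R_NormedModule)). apply Rcorr, w_ex. }
  assert (Hh : is_RInt h 0 b (RInt f 0 b - PP N b)).
  { apply (is_RInt_minus (V:=R_NormedModule)); auto. apply Rcorr, f_ex. }
  set (D := exp (4 * Rabs tau ^ 3) * (Rabs tau ^ S N / INR (fact (S N)))).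
  assert (Hpt : forall x, 0 <= x -> Rabs (h x) <= D * v (4 * S N) x).
  { intros x Hx. unfold h.
    assert (E1 : f x = exp (- x ^ 6) * exp (tau * x ^ 4)) by (unfold f; rewrite exp_plus; auto).
    assert (E2 : sum_n (fun k => cc k * w (4 * k) x) N =
                 exp (- x ^ 6) * sum_n (fun k => (tau * x ^ 4) ^ k / INR (fact k)) N).
    { rewrite <- (sum_n_mult_l (K := R_Ring)). apply sum_n_ext. intros k.
      unfold cc, w. rewrite pow_mult, Rpow_mult_distr. unfold mult; simpl. field.
      apply Rgt_not_eq, fact_pos. }
    rewrite E1, E2. rewrite <- Rmult_minus_distr_l.
    rewrite Rabs_mult, (Rabs_right (exp _)) by (left; apply exp_pos).
    eapply Rle_trans. apply Rmult_le_compat_l. left; apply exp_pos. apply taylor_bound.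
    unfold D, v. rewrite Rabs_mult, (Rabs_right (x ^ 4)) by (apply Rle_ge, pow_le; auto).
    rewrite Rpow_mult_distr, <- pow_mult.
    assert (Hk := key_ineq (Rabs tau) x (Rabs_pos _) Hx).
    assert (exp (- x ^ 6) * exp (Rabs tau * x ^ 4) <= exp (4 * Rabs tau ^ 3) * exp (- x ^ 6 / 2)).
    { rewrite <- !exp_plus. apply exp_le_mono. lra. }
    assert (0 <= Rabs tau ^ S N / INR (fact (S N))).
    { apply Rdiv_le_0_compat. apply pow_le, Rabs_pos. apply fact_pos. }
    assert (0 <= x ^ (4 * S N)) by (apply pow_le; auto).
    assert (0 <= Rabs tau ^ S N / INR (fact (S N)) * x ^ (4 * S N)) by (apply Rmult_le_pos; auto).
    replace (exp (- x ^ 6) * (Rabs tau ^ S N * x ^ (4 * S N) / INR (fact (S N)) * exp (Rabs tau * x ^ 4)))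
      with ((Rabs tau ^ S N / INR (fact (S N)) * x ^ (4 * S N)) * (exp (- x ^ 6) * exp (Rabs tau * x ^ 4)))
      by (field; apply Rgt_not_eq, fact_pos).
    replace (exp (4 * Rabs tau ^ 3) * (Rabs tau ^ S N / INR (fact (S N))) * (x ^ (4 * S N) * exp (- x ^ 6 / 2)))
      with ((Rabs tau ^ S N / INR (fact (S N)) * x ^ (4 * S N)) * (exp (4 * Rabs tau ^ 3) * exp (- x ^ 6 / 2)))
      by ring.
    apply Rmult_le_compat_l; auto. }
  assert (Hex : ex_RInt h 0 b) by (eexists; eauto).
  assert (HD : is_RInt (fun x => D * v (4 * S N) x) 0 b (D * K (4 * S N) b)).
  { apply (is_RInt_scal (V:=R_NormedModule)). apply Rcorr, v_ex. }
  assert (HD' : ex_RInt (fun x => D * v (4 * S N) x) 0 b) by (eexists; eauto).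
  assert (HDm : is_RInt (fun x => - (D * v (4 * S N) x)) 0 b (- (D * K (4 * S N) b))).
  { apply (is_RInt_opp (V:=R_NormedModule)). auto. }
  assert (HDm' : ex_RInt (fun x => - (D * v (4 * S N) x)) 0 b) by (eexists; eauto).
  rewrite <- (Runiq _ _ _ _ Hh).
  assert (HK := K_le_Bd (4 * S N) b Hb).
  assert (HD0 : 0 <= D).
  { unfold D. apply Rmult_le_pos. left; apply exp_pos. apply Rdiv_le_0_compat. apply pow_le, Rabs_pos. apply fact_pos. }
  apply Rle_trans with (D * K (4 * S N) b).
  2:{ unfold EE. fold D. apply Rmult_le_compat_l; auto. }
  apply Rabs_le. split.
  - rewrite <- (Runiq _ _ _ _ HDm). apply RInt_le; auto.
    intros x Hx. assert (H1 := Hpt x ltac:(lra)). apply Rabs_le_between in H1. lra.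
  - rewrite <- (Runiq _ _ _ _ HD). apply RInt_le; auto.
    intros x Hx. assert (H1 := Hpt x ltac:(lra)). apply Rabs_le_between in H1. lra.
Qed.

End Main.

Lemma Bd_S6 m : Bd (m + 6) = (INR m + 1) / 3 * Bd m.
Proof. replace (m + 6)%nat with (S (S (S (S (S (S m)))))) by lia. reflexivity. Qed.

Lemma fact3 M : INR (fact (M + 3)) = INR (fact M) * ((INR M + 1) * (INR M + 2) * (INR M + 3)).
Proof.
  replace (M + 3)%nat with (S (S (S M))) by lia.
  change (fact (S (S (S M)))) with (S (S (S M)) * (S (S M) * (S M * fact M)))%nat.
  rewrite !mult_INR, !S_INR. ring.
Qed.

Lemma EE_to0 tau eps : 0 < eps -> exists N1, forall N, (N1 <= N)%nat -> EE tau N < eps.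
Proof.
  intros Heps.
  set (r := Rabs tau).
  set (a := fun M => r ^ M / INR (fact M) * Bd (4 * M)).
  assert (Hr : 0 <= r) by apply Rabs_pos.
  assert (Hapos : forall M, 0 <= a M).
  { intros M. unfold a. apply Rmult_le_pos. apply Rdiv_le_0_compat. apply pow_le; auto. apply fact_pos. apply Bd_pos. }
  destruct (INR_unbounded (4 * r ^ 3)) as [N0 HN0].
  assert (Hrat : forall M, (N0 <= M)%nat -> a (M + 3)%nat <= a M / 2).
  { intros M HM. unfold a.
    replace (4 * (M + 3))%nat with ((4 * M + 6) + 6)%nat by lia.
    rewrite Bd_S6, Bd_S6, fact3.
    rewrite pow_add. rewrite !plus_INR, mult_INR. simpl INR.
    assert (HMle : INR N0 <= INR M) by (apply le_INR; auto).
    assert (HM0 : 0 <= INR M) by apply pos_INR.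
    assert (Hf := fact_pos M).
    assert (HB := Bd_pos (4 * M)).
    assert (Hp : 0 <= r ^ M) by (apply pow_le; auto).
    set (X := r ^ M / INR (fact M) * Bd (4 * M)).
    assert (HX : 0 <= X) by (unfold X; apply Rmult_le_pos; auto; apply Rdiv_le_0_compat; auto).
    match goal with |- ?L <= _ => replace L with
      (X * (r ^ 3 * (4 * INR M + 7) * (4 * INR M + 1) / (9 * ((INR M + 1) * (INR M + 2) * (INR M + 3)))))
      by (unfold X; field; split; [lra|split; [lra|split; [lra|apply Rgt_not_eq; lra]]]) end.
    fold X.
    assert (Hq : r ^ 3 * (4 * INR M + 7) * (4 * INR M + 1) / (9 * ((INR M + 1) * (INR M + 2) * (INR M + 3))) <= 1/2).
    { assert (0 < (INR M + 1) * (INR M + 2) * (INR M + 3)) by (apply Rmult_lt_0_compat; [apply Rmult_lt_0_compat|]; lra).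
      apply Rmult_le_reg_r with (9 * ((INR M + 1) * (INR M + 2) * (INR M + 3))). lra.
      replace (r ^ 3 * (4 * INR M + 7) * (4 * INR M + 1) / (9 * ((INR M + 1) * (INR M + 2) * (INR M + 3))) *
        (9 * ((INR M + 1) * (INR M + 2) * (INR M + 3)))) with (r ^ 3 * ((4 * INR M + 7) * (4 * INR M + 1))) by (field; lra).
      assert (Hr3 : 0 <= r ^ 3) by (apply pow_le; auto).
      assert ((4 * INR M + 7) * (4 * INR M + 1) <= 16 * ((INR M + 1) * (INR M + 2))) by nra.
      assert (r ^ 3 * ((4 * INR M + 7) * (4 * INR M + 1)) <= r ^ 3 * (16 * ((INR M + 1) * (INR M + 2)))).
      { apply Rmult_le_compat_l; auto. }
      assert (0 <= (INR M + 1) * (INR M + 2)) by nra.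
      nra. }
    assert (0 <= r ^ 3 * (4 * INR M + 7) * (4 * INR M + 1) / (9 * ((INR M + 1) * (INR M + 2) * (INR M + 3)))).
    { apply Rdiv_le_0_compat. apply Rmult_le_pos. apply Rmult_le_pos. apply pow_le; auto. lra. lra.
      apply Rmult_lt_0_compat. lra. apply Rmult_lt_0_compat; [apply Rmult_lt_0_compat|]; lra. }
    nra. }
  set (C := exp (4 * r ^ 3)).
  assert (HC : 0 < C) by apply exp_pos.
  destruct (seq3_to0 a N0 Hapos Hrat (eps / C)) as [N1 HN1].
  { apply Rdiv_lt_0_compat; auto. }
  exists N1. intros N HN. unfold EE. fold r. fold C.
  specialize (HN1 (S N) ltac:(lia)). unfold a in HN1.
  replace (C * (r ^ S N / INR (fact (S N))) * Bd (4 * S N)) with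
    (C * (r ^ S N / INR (fact (S N)) * Bd (4 * S N))) by ring.
  replace eps with (C * (eps / C)) by (field; lra).
  apply Rmult_lt_compat_l; auto.
Qed.

Lemma lim_poly_exp n p : (1 <= p)%nat -> limp (fun b => b ^ n * exp (- b ^ p)) 0.
Proof.
  intros Hp eps Heps.
  assert (Hf := fact_pos (S n)).
  exists (Rmax 1 (INR (fact (S n)) / eps)). intros x Hx.
  assert (Hx1 : 1 < x) by (eapply Rle_lt_trans; [apply Rmax_l|apply Hx]).
  assert (Hx2 : INR (fact (S n)) / eps < x) by (eapply Rle_lt_trans; [apply Rmax_r|apply Hx]).
  rewrite Rminus_0_r. rewrite Rabs_right.
  2:{ apply Rle_ge, Rmult_le_pos. apply pow_le; lra. left; apply exp_pos. }
  eapply Rle_lt_trans. apply poly_exp_bound; auto; lra.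
  apply Rmult_lt_reg_r with (x / eps). apply Rdiv_lt_0_compat; lra.
  replace (INR (fact (S n)) / x * (x / eps)) with (INR (fact (S n)) / eps) by (field; lra).
  replace (eps * (x / eps)) with x by (field; lra). auto.
Qed.

Lemma mono_lim (F : R -> R) B : (forall x y, 0 <= x <= y -> F x <= F y) ->
  (forall x, 0 <= x -> F x <= B) -> exists l, limp F l.
Proof.
  intros Hm Hb.
  set (E := fun z => exists x, 0 <= x /\ z = F x).
  assert (HE : bound E) by (exists B; intros z [x [Hx ->]]; auto).
  assert (HE0 : exists z, E z) by (exists (F 0); exists 0; split; auto; lra).
  destruct (completeness E HE HE0) as [l [Hub Hlub]].
  exists l. intros eps Heps.
  destruct (classic (exists x, 0 <= x /\ l - eps < F x)) as [[x0 [Hx0 Hlt]]|Hn].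
  - exists x0. intros x Hx.
    assert (F x0 <= F x) by (apply Hm; lra).
    assert (F x <= l) by (apply Hub; exists x; split; auto; lra).
    rewrite Rabs_left1 by lra. lra.
  - exfalso. assert (l <= l - eps). apply Hlub. intros z [x [Hx ->]].
    destruct (Rle_lt_dec (F x) (l - eps)); auto. exfalso; apply Hn; exists x; auto.
    lra.
Qed.

Lemma w_le_v m x : 0 <= x -> w m x <= v m x.
Proof.
  intros Hx. unfold w, v. apply Rmult_le_compat_l. apply pow_le; auto.
  apply exp_le_mono. assert (0 <= x ^ 6) by (apply pow_le; auto). lra.
Qed.

Lemma w_pos m x : 0 <= x -> 0 <= w m x.
Proof. intros. unfold w. apply Rmult_le_pos. apply pow_le; auto. left; apply exp_pos. Qed.

Lemma J_exists m : (m <= 5)%nat -> exists l, limp (J m) l.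
Proof.
  intros Hm. apply (mono_lim _ 2).
  - intros x y Hxy. unfold J. rewrite <- (RInt_Chasles (w m) 0 x y) by apply w_ex.
    assert (0 <= RInt (w m) x y). { apply RInt_ge_0. lra. apply w_ex. intros; apply w_pos; lra. }
    unfold plus; simpl. lra.
  - intros x Hx. eapply Rle_trans; [|apply (K_base m x Hm Hx)].
    apply RInt_le; auto. apply w_ex. apply v_ex. intros; apply w_le_v; lra.
Qed.

Lemma J_rec_lim m I : limp (J m) I -> limp (J (m + 6)) ((INR m + 1) / 6 * I).
Proof.
  intros HJ eps Heps.
  assert (Hc : 0 < (INR m + 1) / 6) by (assert (H := pos_INR m); lra).
  destruct (HJ (eps / 2 / ((INR m + 1) / 6))) as [M1 H1]. apply Rdiv_lt_0_compat; lra.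
  destruct (lim_poly_exp (m + 1) 6 ltac:(lia) (eps / 2 * 6)) as [M2 H2]. lra.
  exists (Rmax M1 M2). intros x Hx.
  specialize (H1 x (Rle_lt_trans _ _ _ (Rmax_l _ _) Hx)).
  specialize (H2 x (Rle_lt_trans _ _ _ (Rmax_r _ _) Hx)).
  rewrite J_rec.
  rewrite Rminus_0_r in H2.
  replace ((INR m + 1) / 6 * J m x - x ^ (m + 1) * exp (- x ^ 6) / 6 - (INR m + 1) / 6 * I)
    with ((INR m + 1) / 6 * (J m x - I) - x ^ (m + 1) * exp (- x ^ 6) / 6) by ring.
  eapply Rle_lt_trans. apply Rabs_triang. rewrite Rabs_Ropp, Rabs_mult, Rabs_right by lra.
  unfold Rdiv at 2. rewrite Rabs_mult, (Rabs_right (/ 6)) by lra.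
  assert ((INR m + 1) / 6 * Rabs (J m x - I) < eps / 2).
  { apply Rmult_lt_reg_l with (/ ((INR m + 1) / 6)). apply Rinv_0_lt_compat; auto.
    rewrite <- Rmult_assoc, Rinv_l by lra. lra. }
  lra.
Qed.

Fixpoint Iseq (A0 A1 A2 : R) (k : nat) : R :=
  match k with
  | 0 => A0
  | 1 => A1
  | 2 => A2
  | S (S (S j)) => (4 * INR j + 7) * (4 * INR j + 1) / 36 * Iseq A0 A1 A2 j
  end.

Lemma J_Iseq A0 A1 A2 : limp (J 0) A0 -> limp (J 4) A1 -> limp (J 8) A2 ->
  forall k, limp (J (4 * k)) (Iseq A0 A1 A2 k).
Proof.
  intros H0 H1 H2.
  assert (forall k, limp (J (4 * k)) (Iseq A0 A1 A2 k) /\ limp (J (4 * S k)) (Iseq A0 A1 A2 (S k))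
                    /\ limp (J (4 * S (S k))) (Iseq A0 A1 A2 (S (S k)))).
  { induction k as [|k [IH0 [IH1 IH2]]].
    - replace (4 * 0)%nat with 0%nat by lia. replace (4 * 1)%nat with 4%nat by lia.
      replace (4 * 2)%nat with 8%nat by lia. change (Iseq A0 A1 A2 0) with A0.
      change (Iseq A0 A1 A2 1) with A1. change (Iseq A0 A1 A2 2) with A2. split; [exact H0|split; [exact H1|exact H2]].
    - split; [exact IH1|]. split; [exact IH2|].
      replace (4 * S (S (S k)))%nat with ((4 * k + 6) + 6)%nat by lia.
      assert (H := J_rec_lim _ _ (J_rec_lim _ _ IH0)).
      replace (Iseq A0 A1 A2 (S (S (S k)))) with
        ((INR (4 * k + 6) + 1) / 6 * ((INR (4 * k) + 1) / 6 * Iseq A0 A1 A2 k)). exact H.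
      change (Iseq A0 A1 A2 (S (S (S k)))) with ((4 * INR k + 7) * (4 * INR k + 1) / 36 * Iseq A0 A1 A2 k).
      rewrite plus_INR, mult_INR.
      replace (INR 4) with 4 by (simpl; lra). replace (INR 6) with 6 by (simpl; lra).
      set (q := Iseq A0 A1 A2 k). set (y := INR k). field. }
  intros k. exact (proj1 (H k)).
Qed.

Definition r6 (t : R) := Rpower t (1/6).

Lemma r6_pos t : 0 < r6 t.
Proof. unfold r6, Rpower. apply exp_pos. Qed.

Lemma r6_pow t : 0 < t -> r6 t ^ 6 = t.
Proof.
  intros Ht. unfold r6. rewrite <- Rpower_pow by (unfold Rpower; apply exp_pos).
  rewrite Rpower_mult. replace (1 / 6 * INR 6) with 1 by (simpl; field). apply Rpower_1; auto.
Qed.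

Lemma r6_lt t d : 0 < t -> 0 <= d -> t < d ^ 6 -> r6 t < d.
Proof.
  intros Ht Hd H. destruct (Rlt_le_dec (r6 t) d); auto.
  assert (d ^ 6 <= r6 t ^ 6) by (apply pow_incr; split; auto).
  rewrite r6_pow in H0; auto. lra.
Qed.

Lemma r6_gt t d : 0 < t -> 0 <= d -> d ^ 6 < t -> d < r6 t.
Proof.
  intros Ht Hd H. destruct (Rlt_le_dec d (r6 t)); auto.
  assert (r6 t ^ 6 <= d ^ 6) by (apply pow_incr; split; auto; left; apply r6_pos).
  rewrite r6_pow in H0; auto. lra.
Qed.

Lemma J_small m c : 0 <= c <= 1 -> Rabs (J m c) <= c.
Proof.
  intros Hc. unfold J.
  assert (0 <= RInt (w m) 0 c) by (apply RInt_ge_0; [lra|apply w_ex|intros; apply w_pos; lra]).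
  rewrite Rabs_right by lra.
  apply Rle_trans with (RInt (fun _ => 1) 0 c).
  - apply RInt_le. lra. apply w_ex. apply ex_RInt_const.
    intros x Hx. unfold w. rewrite <- (Rmult_1_r 1). apply Rmult_le_compat.
    apply pow_le; lra. left; apply exp_pos. apply pow_le_one'; lra.
    rewrite <- exp_0. apply exp_le_mono. assert (0 <= x ^ 6) by (apply pow_le; lra). lra.
  - rewrite RInt_const. unfold scal; simpl; unfold mult; simpl. lra.
Qed.

Definition gfun (s t : R) := Rpower t (s - 1) * exp (- t).

Lemma gfun_cont s t : 0 < t -> continuous (gfun s) t.
Proof.
  intros Ht. apply cont_of_der. unfold gfun. apply ex_derive_mult.
  eexists; apply Rpower_der; auto. auto_derive; auto.
Qed.

Lemma gamma_sub m a b : 0 < a -> 0 < b ->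
  is_RInt (gfun ((INR m + 1) / 6)) a b (6 * J m (r6 b) - 6 * J m (r6 a)).
Proof.
  intros Ha Hb.
  set (s := (INR m + 1) / 6).
  set (a' := r6 a). set (b' := r6 b).
  assert (Ha' : 0 < a') by apply r6_pos. assert (Hb' : 0 < b') by apply r6_pos.
  assert (H := is_RInt_comp (V := R_CompleteNormedModule) (gfun s) (fun x => x ^ 6) (fun x => 6 * x ^ 5) a' b').
  assert (Hmin : 0 < Rmin a' b') by (apply Rmin_glb_lt; auto).
  assert (H' : is_RInt (fun y => scal (6 * y ^ 5) (gfun s (y ^ 6))) a' b' (RInt (gfun s) (a' ^ 6) (b' ^ 6))).
  { apply H.
    - intros x Hx. apply gfun_cont. apply pow_lt. lra.
    - intros x Hx. split. auto_derive; auto. simpl; ring. contd. }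
  unfold a', b' in H'. rewrite (r6_pow a Ha), (r6_pow b Hb) in H'. fold a' b' in H'.
  assert (H'' : is_RInt (fun y => 6 * w m y) a' b' (RInt (gfun s) a b)).
  { apply (is_RInt_ext _ _ a' b' _ ) with (2 := H').
    intros x Hx. assert (Hx0 : 0 < x) by (apply Rlt_trans with (Rmin a' b'); tauto).
    change (scal (6 * x ^ 5) (gfun s (x ^ 6))) with (6 * x ^ 5 * gfun s (x ^ 6)). unfold gfun, w.
    rewrite <- (Rpower_pow 6 x Hx0), Rpower_mult.
    rewrite <- (Rpower_pow 5 x Hx0), <- (Rpower_pow m x Hx0).
    replace (INR 6 * (s - 1)) with (INR m - INR 5) by (unfold s; simpl; field).
    replace (Rpower x (INR m)) with (Rpower x (INR 5) * Rpower x (INR m - INR 5)).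
    match goal with |- ?A = ?B => change (@eq R A B) end; ring. rewrite <- Rpower_plus. f_equal. ring. }
  assert (H3 : is_RInt (fun y => 6 * w m y) a' b' (6 * J m b' - 6 * J m a')).
  { replace (6 * J m b' - 6 * J m a') with (6 * RInt (w m) a' b').
    apply (is_RInt_scal (V:=R_NormedModule)). apply Rcorr, w_ex.
    unfold J. rewrite <- (RInt_Chasles (w m) 0 a' b') by apply w_ex.
    unfold plus; simpl. ring. }
  assert (Hex : ex_RInt (gfun s) a b).
  { apply Rex_cont. intros z Hz. apply gfun_cont.
    assert (0 < Rmin a b) by (apply Rmin_glb_lt; auto). lra. }
  assert (E := Runiq _ _ _ _ H''). rewrite <- (Runiq _ _ _ _ H3).
  rewrite E. apply Rcorr. auto.
Qed.

Lemma gamma_J m I : limp (J m) I ->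
  is_RInt_gen (gfun ((INR m + 1) / 6)) (at_right 0) (Rbar_locally p_infty) (6 * I).
Proof.
  intros HJ.
  replace (6 * I) with (6 * I - 0) by ring.
  apply (@gen_prim _ (fun t => 6 * J m (r6 t)) (at_right 0) (Rbar_locally p_infty)
     (@filter_filter _ _ (at_right_proper_filter 0)) (@filter_filter _ _ (Rbar_locally_filter p_infty))).
  - apply (Filter_prod _ _ _ (fun a => 0 < a) (fun b => 0 < b)).
    + unfold at_right, within. apply filter_forall. auto.
    + exists 0. auto.
    + intros a b Ha Hb. simpl. apply gamma_sub; auto.
  - intros eps Heps. set (d := Rmin 1 (eps / 12)).
    assert (Hd : 0 < d) by (apply Rmin_glb_lt; lra).
    assert (Hd6 : 0 < d ^ 6) by (apply pow_lt; auto).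
    exists (mkposreal _ Hd6). intros y Hy Hy0.
    change (Rabs (y - 0) < d ^ 6) in Hy. rewrite Rminus_0_r, Rabs_right in Hy by lra.
    assert (Hr := r6_lt y d Hy0 (Rlt_le _ _ Hd) Hy).
    assert (Hr0 := r6_pos y).
    assert (d <= 1) by apply Rmin_l. assert (d <= eps / 12) by apply Rmin_r.
    assert (HJs := J_small m (r6 y) ltac:(lra)).
    rewrite Rminus_0_r, Rabs_mult, Rabs_right by lra. lra.
  - intros eps Heps. destruct (HJ (eps / 6)) as [M HM]. lra.
    exists (Rmax M 0 ^ 6). intros x Hx.
    assert (H0 : 0 <= Rmax M 0) by apply Rmax_r.
    assert (0 <= Rmax M 0 ^ 6) by (apply pow_le; auto).
    assert (Hr := r6_gt x (Rmax M 0) ltac:(lra) H0 Hx).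
    assert (M <= Rmax M 0) by apply Rmax_l.
    specialize (HM (r6 x) ltac:(lra)).
    replace (6 * J m (r6 x) - 6 * I) with (6 * (J m (r6 x) - I)) by ring.
    rewrite Rabs_mult, Rabs_right by lra. lra.
Qed.

Lemma Gamma_val m I : limp (J m) I ->
  RInt_gen (fun t => Rpower t ((INR m + 1) / 6 - 1) * exp (- t)) (at_right 0) (Rbar_locally p_infty) = 6 * I.
Proof.
  intros HJ. apply (@is_RInt_gen_unique R_CompleteNormedModule _ _
    (Proper_StrongProper _ (at_right_proper_filter 0)) (Proper_StrongProper _ (Rbar_locally_filter p_infty))).
  apply gamma_J; auto.
Qed.

Ltac Rring := match goal with |- ?A = ?B => change (@eq R A B) end; ring.
Ltac Rfield := match goal with |- ?A = ?B => change (@eq R A B) end; field.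

Definition gs (x : R) := exp (- x ^ 2).
Definition G (x : R) := RInt gs 0 x.
Definition hf (x t : R) := exp (- (x ^ 2 * (1 + t ^ 2))) / (1 + t ^ 2).
Definition HH (x : R) := RInt (hf x) 0 1.

Lemma one_t2 t : 1 + t ^ 2 <> 0.
Proof. assert (0 <= t ^ 2) by (rewrite <- Rsqr_pow2; apply Rle_0_sqr). lra. Qed.

Lemma gs_cont x : continuous gs x.
Proof. unfold gs; contd. Qed.

Lemma gs_ex a b : ex_RInt gs a b.
Proof. apply Rex_cont; intros; apply gs_cont. Qed.

Lemma hf_ex x a b : ex_RInt (hf x) a b.
Proof. apply Rex_cont; intros. unfold hf. apply cont_of_der. auto_derive. apply one_t2. Qed.

Lemma hf_Derive u t : Derive (fun z => hf z t) u = -2 * u * exp (- (u ^ 2 * (1 + t ^ 2))).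
Proof.
  apply is_derive_unique. unfold hf. auto_derive. auto.
  assert (H := one_t2 t). simpl in *. field. rewrite Rmult_1_r in H. auto.
Qed.

Lemma HH_der (x : R) : is_derive HH x (-2 * exp (- x ^ 2) * G x).
Proof.
  assert (P : is_derive (fun x0 => RInt (fun t => hf x0 t) 0 1) x
                (RInt (fun t => Derive (fun u => hf u t) x) 0 1)).
  { apply is_derive_RInt_param.
    - apply filter_forall. intros y t _. unfold hf. auto_derive. auto.
    - intros t _. apply continuity_2d_pt_ext with (fun u v => -2 * u * exp (- (u ^ 2 * (1 + v ^ 2)))).
      intros; rewrite hf_Derive; auto.
      apply continuity_2d_pt_mult.
      + apply continuity_2d_pt_mult. apply continuity_2d_pt_const. apply continuity_2d_pt_id1.
      + apply continuity_1d_2d_pt_comp. apply derivable_continuous_pt, derivable_pt_exp.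
        apply continuity_2d_pt_opp. apply continuity_2d_pt_mult.
        * apply continuity_2d_pt_ext with (fun u v => u * u). intros; ring.
          apply continuity_2d_pt_mult; apply continuity_2d_pt_id1.
        * apply continuity_2d_pt_plus. apply continuity_2d_pt_const.
          apply continuity_2d_pt_ext with (fun u v => v * v). intros; ring.
          apply continuity_2d_pt_mult; apply continuity_2d_pt_id2.
    - apply filter_forall. intros y. apply hf_ex. }
  unfold HH. eapply is_derive_ext. intros t; reflexivity.
  replace (-2 * exp (- x ^ 2) * G x) with (RInt (fun t => Derive (fun u => hf u t) x) 0 1). exact P.
  rewrite (RInt_ext _ (fun t => (-2 * exp (- x ^ 2)) * scal x (gs (x * t + 0)))).
  2:{ intros t _. rewrite hf_Derive. unfold gs. change (scal x ?y) with (x * y).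
      replace (- (x ^ 2 * (1 + t ^ 2))) with (- x ^ 2 + - (x * t + 0) ^ 2) by ring.
      rewrite exp_plus. Rring. }
  rewrite (RInt_scal (V := R_CompleteNormedModule) (fun t => scal x (gs (x * t + 0)))).
  rewrite (RInt_comp_lin (V := R_CompleteNormedModule)). unfold G.
  replace (x * 0 + 0) with 0 by ring. replace (x * 1 + 0) with x by ring. reflexivity.
  apply gs_ex.
  apply (ex_RInt_ext (V := R_NormedModule) (fun y => x * gs (x * y + 0))). intros; reflexivity.
  apply (ex_RInt_scal (V := R_NormedModule)). apply Rex_cont. intros. apply cont_of_der. unfold gs; auto_derive; auto.
Qed.

Lemma G_der (x : R) : is_derive G x (gs x).
Proof.
  apply (is_derive_RInt (V := R_NormedModule) gs G 0 x).
  apply filter_forall. intros b. apply Rcorr, gs_ex. apply gs_cont.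
Qed.

Lemma KK_der (x : R) : is_derive (fun y => HH y + G y * G y) x 0.
Proof.
  assert (H1 := HH_der x). assert (H2 := G_der x).
  assert (H3 := is_derive_mult G G x (gs x) (gs x) H2 H2 ltac:(intros; apply Rmult_comm)).
  assert (H4 := is_derive_plus HH (fun y => mult (G y) (G y)) x _ _ H1 H3).
  assert (Ev : plus (-2 * exp (- x ^ 2) * G x) (plus (mult (gs x) (G x)) (mult (G x) (gs x))) = 0).
  { unfold gs. unfold plus, mult; simpl. Rring. }
  rewrite <- Ev.
  apply (is_derive_ext (fun y => plus (HH y) (mult (G y) (G y)))). intros; reflexivity. exact H4.
Qed.

Lemma HH0 : HH 0 = PI / 4.
Proof.
  unfold HH. rewrite <- atan_1.
  replace (atan 1) with (atan 1 - atan 0) by (rewrite atan_0; ring).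
  apply Runiq. apply (is_RInt_ext (fun t => / (1 + t ^ 2))).
  - intros t _. unfold hf. replace (- (0 ^ 2 * (1 + t ^ 2))) with 0 by ring. rewrite exp_0. Rfield. apply one_t2.
  - apply Rderiv_int.
    + intros t _. eapply is_derive_ext. intros; reflexivity.
      replace (/ (1 + t ^ 2)) with (/ (1 + t²)). apply is_derive_atan. unfold Rsqr; simpl. f_equal; ring.
    + intros t _. apply cont_of_der. auto_derive. apply one_t2.
Qed.

Lemma G_sq (x : R) : 0 < x -> G x * G x = PI / 4 - HH x.
Proof.
  intros Hx.
  assert (E := eq_is_derive (V := R_NormedModule) (fun y => HH y + G y * G y) 0 x).
  assert (E' : HH 0 + G 0 * G 0 = HH x + G x * G x).
  { apply E; auto. intros t _. apply KK_der. }
  unfold G at 1 2 in E'. rewrite RInt_point in E'. rewrite HH0 in E'.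
  change (zero : R) with 0 in E'. lra.
Qed.

Lemma HH_bounds (x : R) : 0 <= HH x <= exp (- x ^ 2).
Proof.
  unfold HH. split.
  - apply RInt_ge_0. lra. apply hf_ex. intros t _. unfold hf. apply Rdiv_le_0_compat.
    left; apply exp_pos. assert (0 <= t ^ 2) by (rewrite <- Rsqr_pow2; apply Rle_0_sqr). lra.
  - apply Rle_trans with (RInt (fun _ => exp (- x ^ 2)) 0 1).
    + apply RInt_le. lra. apply hf_ex. apply ex_RInt_const.
      intros t Ht. unfold hf.
      assert (0 <= t ^ 2) by (rewrite <- Rsqr_pow2; apply Rle_0_sqr).
      assert (0 <= x ^ 2) by (rewrite <- Rsqr_pow2; apply Rle_0_sqr).
      apply Rmult_le_reg_r with (1 + t ^ 2). lra.
      replace (exp (- (x ^ 2 * (1 + t ^ 2))) / (1 + t ^ 2) * (1 + t ^ 2)) with (exp (- (x ^ 2 * (1 + t ^ 2)))) by (field; lra).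
      apply Rle_trans with (exp (- x ^ 2)).
      apply exp_le_mono. nra.
      assert (0 < exp (- x ^ 2)) by apply exp_pos. nra.
    + rewrite RInt_const. unfold scal; simpl; unfold mult; simpl. lra.
Qed.

Lemma G_lim : limp G (sqrt PI / 2).
Proof.
  set (s := sqrt PI / 2).
  assert (Hs : 0 < s) by (unfold s; assert (0 < sqrt PI) by (apply sqrt_lt_R0, PI_RGT_0); lra).
  assert (Hs2 : s * s = PI / 4).
  { unfold s. replace (sqrt PI / 2 * (sqrt PI / 2)) with (sqrt PI * sqrt PI / 4) by field.
    rewrite sqrt_sqrt. auto. left; apply PI_RGT_0. }
  intros eps Heps.
  exists (Rmax 1 (1 / (s * eps))). intros x Hx.
  assert (Hx1 : 1 < x) by (eapply Rle_lt_trans; [apply Rmax_l|apply Hx]).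
  assert (Hx2 : 1 / (s * eps) < x) by (eapply Rle_lt_trans; [apply Rmax_r|apply Hx]).
  assert (HG0 : 0 <= G x) by (apply RInt_ge_0; [lra|apply gs_ex|intros; left; apply exp_pos]).
  assert (HGsq := G_sq x ltac:(lra)).
  destruct (HH_bounds x) as [Hb1 Hb2].
  assert (He : exp (- x ^ 2) <= / x).
  { assert (exp (- x ^ 2) <= exp (- x)) by (apply exp_le_mono; nra).
    rewrite (exp_Ropp x) in H. assert (1 + x <= exp x) by apply exp_ineq1_le.
    assert (/ exp x <= / x) by (apply Rinv_le_contravar; lra). lra. }
  assert (Hdiff : (G x - s) * (G x + s) = - HH x) by nra.
  assert (Habs : Rabs (G x - s) * (G x + s) = HH x).
  { rewrite <- (Rabs_right (G x + s)) by lra. rewrite <- Rabs_mult, Hdiff, Rabs_Ropp, Rabs_right; lra. }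
  assert (Rabs (G x - s) * s <= / x).
  { assert (Rabs (G x - s) * s <= Rabs (G x - s) * (G x + s)).
    { apply Rmult_le_compat_l. apply Rabs_pos. lra. }
    lra. }
  assert (/ x < s * eps).
  { apply Rmult_lt_reg_r with (x / (s * eps)). apply Rdiv_lt_0_compat; nra.
    replace (/ x * (x / (s * eps))) with (1 / (s * eps)) by (field; split; lra).
    replace (s * eps * (x / (s * eps))) with x by (field; lra). auto. }
  apply Rmult_lt_reg_r with s; auto. lra.
Qed.

Definition fu (u : R) := u ^ 2 * gs u.

Lemma fu_ex a b : ex_RInt fu a b.
Proof. apply Rex_cont; intros. unfold fu, gs; contd. Qed.

Lemma fu_int c : RInt fu 0 c = (G c - c * gs c) / 2.
Proof.
  assert (H : is_RInt (fun u => 1 * gs u + (-2) * fu u) 0 c ((fun u => u * gs u) c - (fun u => u * gs u) 0)).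
  { apply (Rderiv_int (fun u => u * gs u)).
    - intros x _. unfold gs, fu. auto_derive; auto. simpl. unfold gs. simpl. ring.
    - intros x _. apply cont_of_der. unfold fu, gs. auto_derive. auto. }
  apply Runiq in H. rewrite RInt_lin2 in H by (apply gs_ex || apply fu_ex).
  unfold G. simpl in H. lra.
Qed.

Lemma J8_eq b : J 8 b = (G (b ^ 3) - b ^ 3 * gs (b ^ 3)) / 6.
Proof.
  assert (H := is_RInt_comp (V := R_CompleteNormedModule) fu (fun x => x ^ 3) (fun x => 3 * x ^ 2) 0 b).
  assert (H' : is_RInt (fun y => scal (3 * y ^ 2) (fu (y ^ 3))) 0 b (RInt fu (0 ^ 3) (b ^ 3))).
  { apply H.
    - intros x _. unfold fu, gs; contd.
    - intros x _. split. auto_derive; auto. simpl; ring. contd. }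
  assert (H'' : is_RInt (fun y => 3 * w 8 y) 0 b (RInt fu (0 ^ 3) (b ^ 3))).
  { apply (is_RInt_ext _ _ 0 b _) with (2 := H').
    intros x _. change (scal (3 * x ^ 2) (fu (x ^ 3))) with (3 * x ^ 2 * fu (x ^ 3)).
    unfold fu, gs, w. replace (- (x ^ 3) ^ 2) with (- x ^ 6) by ring. Rring. }
  assert (H3 : is_RInt (fun y => 3 * w 8 y) 0 b (3 * J 8 b)).
  { apply (is_RInt_scal (V:=R_NormedModule)). apply Rcorr, w_ex. }
  assert (E1 := Runiq _ _ _ _ H''). rewrite (Runiq _ _ _ _ H3) in E1.
  replace (0 ^ 3) with 0 in E1 by ring. rewrite fu_int in E1. lra.
Qed.

Lemma J8_lim : limp (J 8) (sqrt PI / 12).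
Proof.
  intros eps Heps.
  destruct (G_lim eps Heps) as [M1 H1].
  destruct (lim_poly_exp 1 2 ltac:(lia) eps Heps) as [M2 H2].
  exists (Rmax 1 (Rmax M1 M2)). intros x Hx.
  assert (Hx1 : 1 < x) by (eapply Rle_lt_trans; [apply Rmax_l|apply Hx]).
  assert (Hx2 : Rmax M1 M2 < x) by (eapply Rle_lt_trans; [apply Rmax_r|apply Hx]).
  assert (M1 <= Rmax M1 M2) by apply Rmax_l. assert (M2 <= Rmax M1 M2) by apply Rmax_r.
  assert (Hx3 : x <= x ^ 3) by (simpl; nra).
  specialize (H1 (x ^ 3) ltac:(lra)). specialize (H2 (x ^ 3) ltac:(lra)).
  rewrite pow_1, Rminus_0_r in H2. fold (gs (x ^ 3)) in H2.
  rewrite J8_eq.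
  replace ((G (x ^ 3) - x ^ 3 * gs (x ^ 3)) / 6 - sqrt PI / 12)
    with (((G (x ^ 3) - sqrt PI / 2) - x ^ 3 * gs (x ^ 3)) / 6) by field.
  unfold Rdiv at 1. rewrite Rabs_mult, (Rabs_right (/ 6)) by lra.
  assert (Rabs (G (x ^ 3) - sqrt PI / 2 - x ^ 3 * gs (x ^ 3)) < 2 * eps).
  { eapply Rle_lt_trans. apply Rabs_triang. rewrite Rabs_Ropp. lra. }
  lra.
Qed.

Definition hterm a1 a2 b1 b2 z n :=
  poch a1 n * poch a2 n / (poch b1 n * poch b2 n) * z ^ n / INR (fact n).

Lemma poch_pos b n : 0 < b -> 0 < poch b n.
Proof.
  intros Hb. induction n; simpl. lra. apply Rmult_lt_0_compat; auto.
  assert (0 <= INR n) by apply pos_INR. lra.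
Qed.

Lemma hterm_S a1 a2 b1 b2 z n : 0 < b1 -> 0 < b2 ->
  hterm a1 a2 b1 b2 z (S n) = hterm a1 a2 b1 b2 z n *
    ((a1 + INR n) * (a2 + INR n) / ((b1 + INR n) * (b2 + INR n)) * z / (INR n + 1)).
Proof.
  intros H1 H2. unfold hterm. simpl poch.
  assert (P1 := poch_pos b1 n H1). assert (P2 := poch_pos b2 n H2).
  assert (Hn : 0 <= INR n) by apply pos_INR.
  assert (Hf := fact_pos n).
  change (fact (S n)) with (S n * fact n)%nat. rewrite mult_INR, S_INR.
  set (pa1 := poch a1 n) in *. set (pa2 := poch a2 n) in *. set (pb1 := poch b1 n) in *. set (pb2 := poch b2 n) in *.
  set (y := INR n) in *. set (F := INR (fact n)) in *. simpl pow.
  field. repeat split; lra.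
Qed.

Lemma poch_ratio a1 a2 b1 b2 n : 0 < a1 -> 0 < a2 ->
  (forall x, 0 <= x -> (a1 + x) * (a2 + x) <= (b1 + x) * (b2 + x)) ->
  poch a1 n * poch a2 n <= poch b1 n * poch b2 n.
Proof.
  intros Ha1 Ha2 H. induction n. simpl; lra.
  simpl. assert (Hn : 0 <= INR n) by apply pos_INR.
  assert (P1 := poch_pos a1 n Ha1). assert (P2 := poch_pos a2 n Ha2).
  specialize (H (INR n) Hn).
  replace (poch a1 n * (a1 + INR n) * (poch a2 n * (a2 + INR n))) with
    ((poch a1 n * poch a2 n) * ((a1 + INR n) * (a2 + INR n))) by ring.
  replace (poch b1 n * (b1 + INR n) * (poch b2 n * (b2 + INR n))) with
    ((poch b1 n * poch b2 n) * ((b1 + INR n) * (b2 + INR n))) by ring.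
  apply Rmult_le_compat; auto. apply Rmult_le_pos; lra. apply Rmult_le_pos; lra.
Qed.

Lemma hyp_series a1 a2 b1 b2 z : 0 < a1 -> 0 < a2 -> 0 < b1 -> 0 < b2 ->
  (forall x, 0 <= x -> (a1 + x) * (a2 + x) <= (b1 + x) * (b2 + x)) ->
  is_series (hterm a1 a2 b1 b2 z) (hyp2F2 a1 a2 b1 b2 z).
Proof.
  intros Ha1 Ha2 Hb1 Hb2 H.
  assert (Hex : ex_series (hterm a1 a2 b1 b2 z)).
  { apply (@ex_series_le R_AbsRing R_CompleteNormedModule _ (fun n => Rabs z ^ n / INR (fact n))).
    - intros n. unfold norm; simpl; unfold abs; simpl. unfold hterm.
      assert (P1 := poch_pos a1 n Ha1). assert (P2 := poch_pos a2 n Ha2).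
      assert (Q1 := poch_pos b1 n Hb1). assert (Q2 := poch_pos b2 n Hb2).
      assert (Hr := poch_ratio a1 a2 b1 b2 n Ha1 Ha2 H).
      assert (Hf := fact_pos n).
      unfold Rdiv. rewrite !Rabs_mult, RPow_abs.
      rewrite (Rabs_right (poch a1 n)), (Rabs_right (poch a2 n)), (Rabs_right (/ _)), (Rabs_right (/ INR _)); try (apply Rle_ge; left; try apply Rinv_0_lt_compat; auto; apply Rmult_lt_0_compat; auto).
      assert (0 <= Rabs (z ^ n)) by apply Rabs_pos.
      assert (poch a1 n * poch a2 n * / (poch b1 n * poch b2 n) <= 1).
      { apply Rmult_le_reg_r with (poch b1 n * poch b2 n). apply Rmult_lt_0_compat; auto.
        rewrite Rmult_assoc, Rinv_l, Rmult_1_l, Rmult_1_r; auto. apply Rgt_not_eq, Rmult_lt_0_compat; auto. }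
      assert (0 < / INR (fact n)) by (apply Rinv_0_lt_compat; auto).
      assert (0 <= poch a1 n * poch a2 n * / (poch b1 n * poch b2 n)).
      { apply Rmult_le_pos. apply Rmult_le_pos; lra. left; apply Rinv_0_lt_compat, Rmult_lt_0_compat; auto. }
      replace (poch a1 n * poch a2 n * / (poch b1 n * poch b2 n) * Rabs (z ^ n) * / INR (fact n))
        with ((poch a1 n * poch a2 n * / (poch b1 n * poch b2 n)) * (Rabs (z ^ n) * / INR (fact n))) by ring.
      rewrite <- (Rmult_1_l (Rabs (z ^ n) * / INR (fact n))) at 2.
      apply Rmult_le_compat_r; auto. apply Rmult_le_pos; lra.
    - eexists; apply exp_series. }
  apply Series_correct in Hex. exact Hex.
Qed.

Lemma t_step tau A0 A1 A2 k :
  cc tau (k + 3) * Iseq A0 A1 A2 (k + 3) =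
  cc tau k * Iseq A0 A1 A2 k *
  (tau ^ 3 * (4 * INR k + 7) * (4 * INR k + 1) / (36 * ((INR k + 1) * (INR k + 2) * (INR k + 3)))).
Proof.
  unfold cc. rewrite fact3, pow_add.
  replace (k + 3)%nat with (S (S (S k))) by lia.
  change (Iseq A0 A1 A2 (S (S (S k)))) with ((4 * INR k + 7) * (4 * INR k + 1) / 36 * Iseq A0 A1 A2 k).
  assert (Hf := fact_pos k). assert (Hk := pos_INR k).
  set (q := Iseq A0 A1 A2 k) in *. set (F := INR (fact k)) in *. set (y := INR k) in *.
  set (p := tau ^ k). field. repeat split; lra.
Qed.

Lemma match_seq (t h : nat -> R) (c : R) off (Q : nat -> R) :
  t off = c * h 0%nat -> (forall n, t (3 * n + off + 3)%nat = t (3 * n + off)%nat * Q n) ->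
  (forall n, h (S n) = h n * Q n) -> forall n, t (3 * n + off)%nat = c * h n.
Proof.
  intros H0 Ht Hh. induction n.
  - replace (3 * 0 + off)%nat with off by lia. auto.
  - replace (3 * S n + off)%nat with (3 * n + off + 3)%nat by lia.
    rewrite Ht, IHn, Hh. ring.
Qed.

Section Terms.
Variables tau A0 A1 A2 : R.
Let z := 4 * tau ^ 3 / 27.
Let t := fun k => cc tau k * Iseq A0 A1 A2 k.

Lemma t_case0 n : t (3 * n + 0)%nat = A0 * hterm (1/12) (7/12) (1/3) (2/3) z n.
Proof.
  apply (match_seq t _ A0 0 (fun n => (1/12 + INR n) * (7/12 + INR n) / ((1/3 + INR n) * (2/3 + INR n)) * z / (INR n + 1))).
  - unfold t, hterm, cc. simpl. field.
  - intros m. unfold t. rewrite t_step. f_equal.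
    rewrite plus_INR, mult_INR. unfold z. assert (Hm := pos_INR m). set (y := INR m) in *.
    replace (INR 3) with 3 by (simpl; lra). replace (INR 0) with 0 by (simpl; lra).
    field. repeat split; lra.
  - intros m. apply hterm_S; lra.
Qed.

Lemma t_case1 n : t (3 * n + 1)%nat = tau * A1 * hterm (5/12) (11/12) (2/3) (4/3) z n.
Proof.
  apply (match_seq t _ (tau * A1) 1 (fun n => (5/12 + INR n) * (11/12 + INR n) / ((2/3 + INR n) * (4/3 + INR n)) * z / (INR n + 1))).
  - unfold t, hterm, cc. simpl. field.
  - intros m. unfold t. rewrite t_step. f_equal.
    rewrite plus_INR, mult_INR. unfold z. assert (Hm := pos_INR m). set (y := INR m) in *.
    replace (INR 3) with 3 by (simpl; lra). replace (INR 1) with 1 by (simpl; lra).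
    field. repeat split; lra.
  - intros m. apply hterm_S; lra.
Qed.

Lemma t_case2 n : t (3 * n + 2)%nat = tau ^ 2 * A2 / 2 * hterm (3/4) (5/4) (4/3) (5/3) z n.
Proof.
  apply (match_seq t _ (tau ^ 2 * A2 / 2) 2 (fun n => (3/4 + INR n) * (5/4 + INR n) / ((4/3 + INR n) * (5/3 + INR n)) * z / (INR n + 1))).
  - unfold t, hterm, cc. simpl. field.
  - intros m. unfold t. rewrite t_step. f_equal.
    rewrite plus_INR, mult_INR. unfold z. assert (Hm := pos_INR m). set (y := INR m) in *.
    replace (INR 3) with 3 by (simpl; lra). replace (INR 2) with 2 by (simpl; lra).
    field. repeat split; lra.
  - intros m. apply hterm_S; lra.
Qed.

End Terms.

Lemma sum3 (a : nat -> R) M :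
  sum_n a (3 * M + 2)%nat = sum_n (fun n => a (3 * n + 0)%nat + a (3 * n + 1)%nat + a (3 * n + 2)%nat) M.
Proof.
  induction M.
  - rewrite sum_O. change (3 * 0 + 2)%nat with 2%nat. rewrite !sum_Sn, sum_O.
    unfold plus; simpl. ring.
  - replace (3 * S M + 2)%nat with (S (S (S (3 * M + 2)))) by lia.
    rewrite !sum_Sn, IHM.
    replace (3 * S M + 0)%nat with (S (3 * M + 2)) by lia.
    replace (3 * S M + 1)%nat with (S (S (3 * M + 2))) by lia.
    replace (3 * S M + 2)%nat with (S (S (S (3 * M + 2)))) by lia.
    unfold plus; simpl. ring.
Qed.

Lemma limp_sum (g : nat -> R -> R) (l : nat -> R) :
  (forall k, limp (g k) (l k)) -> forall N, limp (fun b => sum_n (fun k => g k b) N) (sum_n l N).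
Proof.
  intros H N. induction N.
  - intros eps Heps. destruct (H 0%nat eps Heps) as [M HM]. exists M. intros x Hx.
    rewrite !sum_O. auto.
  - intros eps Heps. destruct (IHN (eps/2) ltac:(lra)) as [M1 H1].
    destruct (H (S N) (eps/2) ltac:(lra)) as [M2 H2].
    exists (Rmax M1 M2). intros x Hx.
    specialize (H1 x (Rle_lt_trans _ _ _ (Rmax_l _ _) Hx)).
    specialize (H2 x (Rle_lt_trans _ _ _ (Rmax_r _ _) Hx)).
    rewrite !sum_Sn. unfold plus; simpl.
    replace (sum_n (fun k => g k x) N + g (S N) x - (sum_n l N + l (S N)))
      with ((sum_n (fun k => g k x) N - sum_n l N) + (g (S N) x - l (S N))) by ring.
    eapply Rle_lt_trans. apply Rabs_triang. lra.
Qed.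

Lemma series_eps (a : nat -> R) l : is_series a l ->
  forall eps, 0 < eps -> exists N, forall n, (N <= n)%nat -> Rabs (sum_n a n - l) < eps.
Proof.
  intros H eps Heps.
  assert (H' := proj1 (filterlim_locally (F := eventually) (sum_n a) l) H (mkposreal eps Heps)).
  destruct H' as [N HN]. exists N. intros n Hn. apply HN. auto.
Qed.

Lemma sum_lin3 (u1 u2 u3 : nat -> R) c0 c1 c2 M :
  sum_n (fun n => c0 * u1 n + c1 * u2 n + c2 * u3 n) M =
  c0 * sum_n u1 M + c1 * sum_n u2 M + c2 * sum_n u3 M.
Proof.
  induction M. rewrite !sum_O. auto.
  rewrite !sum_Sn, IHM. unfold plus; simpl. ring.
Qed.

Lemma limp_scal (g : R -> R) l c : limp g l -> limp (fun b => c * g b) (c * l).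
Proof.
  intros H eps Heps.
  assert (Hc : 0 < 1 + Rabs c) by (assert (H0 := Rabs_pos c); lra).
  destruct (H (eps / (1 + Rabs c))) as [M HM]. apply Rdiv_lt_0_compat; auto.
  exists M. intros x Hx. specialize (HM x Hx).
  replace (c * g x - c * l) with (c * (g x - l)) by ring. rewrite Rabs_mult.
  apply Rle_lt_trans with ((1 + Rabs c) * Rabs (g x - l)).
  apply Rmult_le_compat_r. apply Rabs_pos. lra.
  apply Rmult_lt_reg_l with (/ (1 + Rabs c)). apply Rinv_0_lt_compat; auto.
  rewrite <- Rmult_assoc, Rinv_l by lra. unfold Rdiv in HM. lra.
Qed.

Lemma main_lim tau A0 A1 A2 : limp (J 0) A0 -> limp (J 4) A1 -> limp (J 8) A2 ->
  limp (fun b => RInt (f tau) 0 b)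
   (A0 * hyp2F2 (1/12) (7/12) (1/3) (2/3) (4 * tau ^ 3 / 27)
    + tau * A1 * hyp2F2 (5/12) (11/12) (2/3) (4/3) (4 * tau ^ 3 / 27)
    + tau ^ 2 * A2 / 2 * hyp2F2 (3/4) (5/4) (4/3) (5/3) (4 * tau ^ 3 / 27)).
Proof.
  intros H0 H1 H2.
  set (z := 4 * tau ^ 3 / 27).
  assert (HI := J_Iseq A0 A1 A2 H0 H1 H2).
  assert (S1 := hyp_series (1/12) (7/12) (1/3) (2/3) z ltac:(lra) ltac:(lra) ltac:(lra) ltac:(lra) ltac:(intros; nra)).
  assert (S2 := hyp_series (5/12) (11/12) (2/3) (4/3) z ltac:(lra) ltac:(lra) ltac:(lra) ltac:(lra) ltac:(intros; nra)).
  assert (S3 := hyp_series (3/4) (5/4) (4/3) (5/3) z ltac:(lra) ltac:(lra) ltac:(lra) ltac:(lra) ltac:(intros; nra)).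
  set (c0 := A0). set (c1 := tau * A1). set (c2 := tau ^ 2 * A2 / 2).
  set (V1 := hyp2F2 (1/12) (7/12) (1/3) (2/3) z) in *.
  set (V2 := hyp2F2 (5/12) (11/12) (2/3) (4/3) z) in *.
  set (V3 := hyp2F2 (3/4) (5/4) (4/3) (5/3) z) in *.
  set (C := 1 + Rabs c0 + Rabs c1 + Rabs c2).
  assert (HC : 0 < C) by (unfold C; generalize (Rabs_pos c0) (Rabs_pos c1) (Rabs_pos c2); lra).
  intros eps Heps.
  destruct (EE_to0 tau (eps / 3)) as [N1 HN1]. lra.
  assert (Hd : 0 < eps / 3 / C) by (apply Rdiv_lt_0_compat; lra).
  destruct (series_eps _ _ S1 _ Hd) as [K1 HK1].
  destruct (series_eps _ _ S2 _ Hd) as [K2 HK2].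
  destruct (series_eps _ _ S3 _ Hd) as [K3 HK3].
  set (M := (N1 + K1 + K2 + K3)%nat).
  set (N := (3 * M + 2)%nat).
  assert (HQ : Rabs (sum_n (fun k => cc tau k * Iseq A0 A1 A2 k) N - (c0 * V1 + c1 * V2 + c2 * V3)) < eps / 3).
  { unfold N. rewrite sum3.
    rewrite (sum_n_ext _ (fun n => c0 * hterm (1/12) (7/12) (1/3) (2/3) z n
                                   + c1 * hterm (5/12) (11/12) (2/3) (4/3) z n
                                   + c2 * hterm (3/4) (5/4) (4/3) (5/3) z n)).
    2:{ intros n. rewrite (t_case0 tau A0 A1 A2 n), (t_case1 tau A0 A1 A2 n), (t_case2 tau A0 A1 A2 n). reflexivity. }
    rewrite sum_lin3.
    specialize (HK1 M ltac:(unfold M; lia)). specialize (HK2 M ltac:(unfold M; lia)).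
    specialize (HK3 M ltac:(unfold M; lia)).
    set (s1 := sum_n (hterm (1/12) (7/12) (1/3) (2/3) z) M) in *.
    set (s2 := sum_n (hterm (5/12) (11/12) (2/3) (4/3) z) M) in *.
    set (s3 := sum_n (hterm (3/4) (5/4) (4/3) (5/3) z) M) in *.
    replace (c0 * s1 + c1 * s2 + c2 * s3 - (c0 * V1 + c1 * V2 + c2 * V3))
      with (c0 * (s1 - V1) + c1 * (s2 - V2) + c2 * (s3 - V3)) by ring.
    eapply Rle_lt_trans. apply Rabs_triang. rewrite Rabs_mult.
    eapply Rle_lt_trans. apply Rplus_le_compat_r. apply Rabs_triang. rewrite !Rabs_mult.
    assert (Rabs c0 * Rabs (s1 - V1) <= Rabs c0 * (eps / 3 / C)) by (apply Rmult_le_compat_l; [apply Rabs_pos|lra]).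
    assert (Rabs c1 * Rabs (s2 - V2) <= Rabs c1 * (eps / 3 / C)) by (apply Rmult_le_compat_l; [apply Rabs_pos|lra]).
    assert (Rabs c2 * Rabs (s3 - V3) <= Rabs c2 * (eps / 3 / C)) by (apply Rmult_le_compat_l; [apply Rabs_pos|lra]).
    assert ((Rabs c0 + Rabs c1 + Rabs c2) * (eps / 3 / C) < eps / 3).
    { apply Rmult_lt_reg_r with C; auto.
      replace ((Rabs c0 + Rabs c1 + Rabs c2) * (eps / 3 / C) * C) with ((Rabs c0 + Rabs c1 + Rabs c2) * (eps / 3)) by (field; lra).
      unfold C. nra. }
    lra. }
  assert (HP := limp_sum (fun k b => cc tau k * J (4 * k) b) (fun k => cc tau k * Iseq A0 A1 A2 k)
                  (fun k => limp_scal _ _ (cc tau k) (HI k)) N).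
  destruct (HP (eps / 3) ltac:(lra)) as [B HB].
  exists (Rmax B 0). intros b Hb.
  assert (Hb0 : 0 <= b) by (left; eapply Rle_lt_trans; [apply Rmax_r|apply Hb]).
  specialize (HB b (Rle_lt_trans _ _ _ (Rmax_l _ _) Hb)).
  assert (HE := err_bound tau N b Hb0).
  assert (HE2 := HN1 N ltac:(unfold N, M; lia)).
  unfold PP in HE.
  set (P := sum_n (fun k => cc tau k * J (4 * k) b) N) in *.
  set (Q := sum_n (fun k => cc tau k * Iseq A0 A1 A2 k) N) in *.
  replace (RInt (f tau) 0 b - (c0 * V1 + c1 * V2 + c2 * V3))
    with ((RInt (f tau) 0 b - P) + ((P - Q) + (Q - (c0 * V1 + c1 * V2 + c2 * V3)))) by ring.
  eapply Rle_lt_trans. apply Rabs_triang.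
  eapply Rle_lt_trans. apply Rplus_le_compat_l. apply Rabs_triang.
  lra.
Qed.

Lemma F_odd tau x : RInt (f tau) 0 (- x) = - RInt (f tau) 0 x.
Proof.
  assert (H1 : is_RInt (f tau) (- 0) (- x) (RInt (f tau) 0 (- x))).
  { replace (- 0) with 0 by ring. apply Rcorr, f_ex. }
  apply (is_RInt_comp_opp (V := R_NormedModule)) in H1.
  assert (H2 : is_RInt (fun y => opp (f tau y)) 0 x (opp (RInt (f tau) 0 x))).
  { apply (is_RInt_opp (V := R_NormedModule)). apply Rcorr, f_ex. }
  assert (H3 : is_RInt (fun y => opp (f tau y)) 0 x (RInt (f tau) 0 (- x))).
  { apply (is_RInt_ext _ _ 0 x _) with (2 := H1). intros y _. unfold f. f_equal. f_equal. f_equal; ring. }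
  exact (eq_trans (eq_sym (Runiq _ _ _ _ H3)) (Runiq _ _ _ _ H2)).
Qed.

Theorem lemma6p3 (tau : R) :
  is_RInt_gen (fun x => exp (- x ^ 6 + tau * x ^ 4))
    (Rbar_locally m_infty) (Rbar_locally p_infty)
    (1 / 3 * Gamma (1 / 6)
       * hyp2F2 (1 / 12) (7 / 12) (1 / 3) (2 / 3) (4 * tau ^ 3 / 27)
     + 1 / 3 * tau * Gamma (5 / 6)
       * hyp2F2 (5 / 12) (11 / 12) (2 / 3) (4 / 3) (4 * tau ^ 3 / 27)
     + tau ^ 2 * sqrt PI / 12
       * hyp2F2 (3 / 4) (5 / 4) (4 / 3) (5 / 3) (4 * tau ^ 3 / 27)).
Proof.
  destruct (J_exists 0 ltac:(lia)) as [A0 H0].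
  destruct (J_exists 4 ltac:(lia)) as [A1 H1].
  assert (H2 := J8_lim).
  assert (HL := main_lim tau A0 A1 (sqrt PI / 12) H0 H1 H2).
  assert (G0 : Gamma (1 / 6) = 6 * A0).
  { unfold Gamma. replace (1 / 6) with ((INR 0 + 1) / 6) by (simpl; field). apply Gamma_val; auto. }
  assert (G1 : Gamma (5 / 6) = 6 * A1).
  { unfold Gamma. replace (5 / 6) with ((INR 4 + 1) / 6) by (simpl; field). apply Gamma_val; auto. }
  rewrite G0, G1.
  set (V1 := hyp2F2 (1 / 12) (7 / 12) (1 / 3) (2 / 3) (4 * tau ^ 3 / 27)) in *.
  set (V2 := hyp2F2 (5 / 12) (11 / 12) (2 / 3) (4 / 3) (4 * tau ^ 3 / 27)) in *.
  set (V3 := hyp2F2 (3 / 4) (5 / 4) (4 / 3) (5 / 3) (4 * tau ^ 3 / 27)) in *.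
  set (L := A0 * V1 + tau * A1 * V2 + tau ^ 2 * (sqrt PI / 12) / 2 * V3) in *.
  replace (1 / 3 * (6 * A0) * V1 + 1 / 3 * tau * (6 * A1) * V2 + tau ^ 2 * sqrt PI / 12 * V3)
    with (L - - L) by (unfold L; field).
  apply (@gen_prim _ (fun b => RInt (f tau) 0 b) (Rbar_locally m_infty) (Rbar_locally p_infty)
     (@filter_filter _ _ (Rbar_locally_filter m_infty)) (@filter_filter _ _ (Rbar_locally_filter p_infty))).
  - apply (Filter_prod _ _ _ (fun _ => True) (fun _ => True)).
    + exists 0. auto.
    + exists 0. auto.
    + intros a b _ _. simpl.
      assert (E : RInt (f tau) 0 b - RInt (f tau) 0 a = RInt (f tau) a b).
      { rewrite <- (RInt_Chasles (f tau) 0 a b) by apply f_ex. unfold plus; simpl. ring. }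
      rewrite E. apply (Rcorr (f tau)), f_ex.
  - intros eps Heps. destruct (HL eps Heps) as [M HM]. exists (- M). intros x Hx.
    specialize (HM (- x) ltac:(lra)).
    replace (RInt (f tau) 0 x) with (- RInt (f tau) 0 (- x)).
    replace (- RInt (f tau) 0 (- x) - - L) with (- (RInt (f tau) 0 (- x) - L)) by ring.
    rewrite Rabs_Ropp. auto.
    rewrite F_odd. ring.
  - intros eps Heps. destruct (HL eps Heps) as [M HM]. exists M. auto.
Qed.
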